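(* Let $0<\lambda<1$ and $0 < c < \frac{2}{1-\lambda}$. If the improper integral $$\int_1^\infty \frac{W(t) - \exp(c t^{1-\lambda})}{t^\lambda \exp(c t^{1-\lambda})}\,dt$$ converges, then $W(x) \sim \exp(c x^{1-\lambda})$.
   Context: Fix $0<\lambda<1$ and $c>0$. For $x>0$ define $w(x) = \frac{c(1-\lambda)\log(x)\exp(c x^{1-\lambda})}{x^\lambda}$ and $W(x) = \sum_{p \le x} w(p)$, the sum over primes $p\le x$. $f\sim g$ means $f(x)/g(x)\to1$ as $x\to\infty$. *)

(* Defs.v *)
From Stdlib Require Import Reals ZArith Znumtheory.
From Coquelicot Require Import Coquelicot.
Open Scope R_scope.

Definition w (lam c x : R) : R :=
  c * (1 - lam) * ln x * exp (c * Rpower x (1 - lam)) / Rpower x lam.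

Definition wprime (lam c : R) (n : nat) : R :=
  if prime_dec (Z.of_nat n) then w lam c (INR n) else 0.

(* W(x) = sum_{p <= x, p prime} w(p); the primes p <= x are those p <= floor x *)
Definition W (lam c x : R) : R :=
  sum_n (wprime lam c) (Z.to_nat (Int_part x)).

(* Main.v *)
Require Import Defs.
From Stdlib Require Import Reals Lra Lia ZArith Znumtheory Classical.
From Coquelicot Require Import Coquelicot.
Open Scope R_scope.

Lemma cauchy_gen (f : R -> R) :
  ex_RInt_gen f (at_point 1) (Rbar_locally p_infty) ->
  forall d, 0 < d -> exists M, forall a b, M < a -> M < b ->
    exists I, is_RInt f a b I /\ Rabs I < d.
Proof.
  intros [l Hl] d hd.
  assert (hd2 : 0 < d/2) by lra.
  specialize (Hl (fun y => Rabs (y - l) < d/2)).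
  destruct Hl as [Q Rr HQ HR HP].
  { exists (mkposreal _ hd2). intros y Hy. exact Hy. }
  destruct HR as [M HM].
  exists M. intros a b ha hb.
  destruct (HP 1 a HQ (HM a ha)) as [y1 [H1 E1]].
  destruct (HP 1 b HQ (HM b hb)) as [y2 [H2 E2]].
  simpl in *.
  exists (y2 - y1). split.
  - apply is_RInt_swap in H1.
    pose proof (is_RInt_Chasles _ _ _ _ _ _ H1 H2) as H.
    replace (y2 - y1) with (plus (opp y1) y2). exact H.
    unfold plus, opp; simpl. unfold Rminus. lra.
  - apply Rabs_def2 in E1. apply Rabs_def2 in E2.
    apply Rabs_def1; lra.
Qed.

Lemma wprime_ge0 lam c n : 0 < c -> lam < 1 -> 0 <= wprime lam c n.
Proof.
  intros hc hl. unfold wprime. destruct prime_dec as [p|]; [|lra].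
  apply prime_ge_2 in p.
  assert (h2 : 2 <= INR n).
  { replace 2 with (INR 2) by (simpl; ring). apply le_INR. lia. }
  assert (0 < ln (INR n)) by (rewrite <- ln_1; apply ln_increasing; lra).
  unfold w, Rpower. unfold Rdiv.
  apply Rmult_le_pos; [|left; apply Rinv_0_lt_compat, exp_pos].
  apply Rmult_le_pos; [|left; apply exp_pos].
  apply Rmult_le_pos; [|lra].
  apply Rmult_le_pos; lra.
Qed.

Lemma sum_mono (a : nat -> R) : (forall n, 0 <= a n) ->
  forall n m, (n <= m)%nat -> sum_n a n <= sum_n a m.
Proof.
  intros Ha n m H. induction H. lra.
  rewrite sum_Sn. unfold plus; simpl. specialize (Ha (S m)). lra.
Qed.

Lemma Int_part_mono x y : x <= y -> (Int_part x <= Int_part y)%Z.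
Proof.
  intros h. destruct (base_Int_part x) as [a1 a2].
  destruct (base_Int_part y) as [b1 b2].
  assert (IZR (Int_part x) < IZR (Int_part y + 1)) by (rewrite plus_IZR; simpl; lra).
  apply lt_IZR in H. lia.
Qed.

Lemma W_mono lam c x y : 0 < c -> lam < 1 -> x <= y -> W lam c x <= W lam c y.
Proof.
  intros hc hl h. unfold W. apply sum_mono.
  intros; now apply wprime_ge0.
  apply Int_part_mono in h. lia.
Qed.

Definition Fg lam c K t := (K - exp (c * Rpower t (1 - lam))) / (Rpower t lam * exp (c * Rpower t (1 - lam))).
Definition Gg lam c K t := - K / (c * (1 - lam)) * exp (- (c * Rpower t (1 - lam))) - Rpower t (1 - lam) / (1 - lam).

Lemma Gg_deriv lam c K t : 0 < c -> 0 < lam < 1 -> 0 < t -> is_derive (Gg lam c K) t (Fg lam c K t).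
Proof.
  intros hc hl ht. unfold Gg, Fg, Rpower.
  auto_derive.
  - lra.
  - assert (hAB : exp ((1 - lam) * ln t) = t / exp (lam * ln t)).
    { assert (H := exp_pos (lam * ln t)).
      apply (Rmult_eq_reg_r (exp (lam * ln t))); [|lra].
      unfold Rdiv; rewrite Rmult_assoc, Rinv_l, Rmult_1_r by lra.
      rewrite <- exp_plus. replace ((1 - lam) * ln t + lam * ln t) with (ln t) by ring.
      now apply exp_ln. }
    assert (hE : exp (- (c * exp ((1 - lam) * ln t))) = / exp (c * exp ((1 - lam) * ln t))).
    { rewrite exp_Ropp. reflexivity. }
    rewrite hE. set (E := exp (c * exp ((1 - lam) * ln t))).
    assert (hE0 : 0 < E) by apply exp_pos.
    assert (H5 := exp_pos (lam * ln t)).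
    rewrite hAB. field. repeat split; lra.
Qed.

Lemma Fg_cont lam c K t : 0 < c -> 0 < lam < 1 -> 0 < t -> continuous (Fg lam c K) t.
Proof.
  intros hc hl ht. apply (ex_derive_continuous (K:=R_AbsRing) (V:=R_NormedModule)). unfold Fg, Rpower. auto_derive.
  repeat split; try lra.
  assert (H := exp_pos (lam * ln t)). assert (H2 := exp_pos (c * exp ((1 - lam) * ln t))).
  nra.
Qed.

Lemma Fg_int lam c K a b : 0 < c -> 0 < lam < 1 -> 0 < a -> 0 < b ->
  is_RInt (Fg lam c K) a b (Gg lam c K b - Gg lam c K a).
Proof.
  intros hc hl ha hb.
  assert (H : is_RInt (Fg lam c K) a b (minus (Gg lam c K b) (Gg lam c K a))).
  { apply (is_RInt_derive (V:=R_CompleteNormedModule)); intros x hx;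
    assert (0 < x) by (destruct hx; unfold Rmin in *; destruct Rle_dec; lra).
    now apply Gg_deriv. now apply Fg_cont. }
  exact H.
Qed.

Lemma is_RInt_cmp (f g : R -> R) a b I J : a <= b -> is_RInt f a b I -> is_RInt g a b J ->
  (forall x, a < x < b -> f x <= g x) -> I <= J.
Proof.
  intros hab hf hg hx.
  rewrite <- (is_RInt_unique _ _ _ _ hf), <- (is_RInt_unique _ _ _ _ hg).
  apply RInt_le; auto. eexists; eauto. eexists; eauto.
Qed.

Lemma P_inv v p : 0 < v -> 0 < p -> Rpower (Rpower v (/ p)) p = v.
Proof. intros hv hp. rewrite Rpower_mult, Rinv_l by lra. now apply Rpower_1. Qed.

Lemma P_lt_inv a b p : 0 < a -> 0 < b -> 0 < p -> Rpower a p < Rpower b p -> a < b.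
Proof.
  intros ha hb hp h. destruct (Rlt_or_le a b) as [|h2]; auto.
  assert (Rpower b p <= Rpower a p) by (apply Rle_Rpower_l; lra). lra.
Qed.

Lemma Rpower_pos' t p : 0 < Rpower t p.
Proof. apply exp_pos. Qed.

Lemma upper lam c : 0 < lam < 1 -> 0 < c ->
  ex_RInt_gen
    (fun t => (W lam c t - exp (c * Rpower t (1 - lam)))
              / (Rpower t lam * exp (c * Rpower t (1 - lam))))
    (at_point 1) (Rbar_locally p_infty) ->
  forall eps, 0 < eps -> exists M, forall x, M < x ->
    W lam c x < (1 + eps) * exp (c * Rpower x (1 - lam)).
Proof.
  intros hl hc Hint eps he.
  set (p := 1 - lam). assert (hp : 0 < p) by (unfold p; lra).
  set (L := ln (1 + eps)).
  assert (hL : L < eps).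
  { assert (H1 : 1 + eps < exp eps) by (apply exp_ineq1; lra).
    apply ln_increasing in H1; [|lra]. rewrite ln_exp in H1. exact H1. }
  assert (hL0 : 0 < L).
  { unfold L. rewrite <- ln_1. apply ln_increasing; lra. }
  set (d := (eps - L) / (c * p)).
  assert (hd : 0 < d) by (unfold d; apply Rdiv_lt_0_compat; [lra| apply Rmult_lt_0_compat; lra]).
  destruct (cauchy_gen _ Hint d hd) as [M0 HM0].
  exists (Rmax M0 1). apply NNPP; intro Hn.
  apply not_all_ex_not in Hn. destruct Hn as [x Hx].
  apply imply_to_and in Hx. destruct Hx as [hx Hx]. apply Rnot_lt_le in Hx.
  assert (hx0 : M0 < x /\ 1 < x) by (split; eapply Rle_lt_trans; eauto; [apply Rmax_l | apply Rmax_r]).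
  set (Px := Rpower x p).
  assert (hPx : 0 < Px) by apply Rpower_pos'.
  set (z := Rpower (Px + L / c) (/ p)).
  assert (hPz : Rpower z p = Px + L / c).
  { apply P_inv; auto. assert (0 < L / c) by (apply Rdiv_lt_0_compat; lra). lra. }
  assert (hz0 : 0 < z) by apply Rpower_pos'.
  assert (hxz : x < z).
  { apply (P_lt_inv _ _ p); try lra. rewrite hPz. fold Px.
    assert (0 < L / c) by (apply Rdiv_lt_0_compat; lra). lra. }
  destruct (HM0 x z) as [I [HI HIa]]; try lra.
  set (K := (1 + eps) * exp (c * Px)).
  pose proof (Fg_int lam c K x z hc hl ltac:(lra) hz0) as HJ.
  assert (Hc := is_RInt_cmp _ _ x z _ _ (Rlt_le _ _ hxz) HJ HI).
  assert (Hval : Gg lam c K z - Gg lam c K x = d).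
  { unfold Gg. fold p. rewrite hPz. fold Px.
    replace (exp (- (c * (Px + L / c)))) with (exp (- (c * Px)) * / (1 + eps)).
    2:{ replace (- (c * (Px + L / c))) with (- (c * Px) + - L) by (field; lra).
        rewrite exp_plus, !exp_Ropp. unfold L. rewrite exp_ln by lra. reflexivity. }
    rewrite exp_Ropp. unfold K, d, L. 
    assert (0 < exp (c * Px)) by apply exp_pos. field. repeat split; lra. }
  rewrite Hval in Hc.
  apply Rabs_def2 in HIa.
  assert (d <= I); [|lra].
  apply Hc. intros t ht.
  assert (ht0 : 0 < t) by lra.
  unfold Fg. fold p.
  assert (hW : K <= W lam c t).
  { eapply Rle_trans. apply Hx. apply W_mono; lra. }
  unfold Rdiv. apply Rmult_le_compat_r. 
  { left. apply Rinv_0_lt_compat, Rmult_lt_0_compat; apply exp_pos. }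
  lra.
Qed.

Lemma lower lam c : 0 < lam < 1 -> 0 < c ->
  ex_RInt_gen
    (fun t => (W lam c t - exp (c * Rpower t (1 - lam)))
              / (Rpower t lam * exp (c * Rpower t (1 - lam))))
    (at_point 1) (Rbar_locally p_infty) ->
  forall eps, 0 < eps < 1 -> exists M, forall x, M < x ->
    (1 - eps) * exp (c * Rpower x (1 - lam)) < W lam c x.
Proof.
  intros hl hc Hint eps he.
  set (p := 1 - lam). assert (hp : 0 < p) by (unfold p; lra).
  set (L := ln (1 - eps)).
  assert (hL : L < - eps).
  { assert (H1 : 1 + - eps < exp (- eps)) by (apply exp_ineq1; lra).
    apply ln_increasing in H1; [|lra]. rewrite ln_exp in H1. unfold L.
    replace (1 - eps) with (1 + - eps) by ring. exact H1. }
  set (d := - (eps + L) / (c * p)).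
  assert (hd : 0 < d) by (unfold d; apply Rdiv_lt_0_compat; [lra| apply Rmult_lt_0_compat; lra]).
  destruct (cauchy_gen _ Hint d hd) as [M0 HM0].
  set (M1 := Rmax M0 1).
  assert (hM1 : M0 <= M1 /\ 1 <= M1) by (split; [apply Rmax_l | apply Rmax_r]).
  assert (hLc : 0 < - L / c) by (apply Rdiv_lt_0_compat; lra).
  assert (hLc' : L / c = - (- L / c)) by (field; lra).
  set (N := Rpower (Rpower M1 p - L / c) (/ p)).
  assert (hPN : Rpower N p = Rpower M1 p - L / c).
  { apply P_inv; auto. assert (0 < Rpower M1 p) by apply Rpower_pos'. lra. }
  assert (hN0 : 0 < N) by apply Rpower_pos'.
  exists N. apply NNPP; intro Hn.
  apply not_all_ex_not in Hn. destruct Hn as [x Hx].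
  apply imply_to_and in Hx. destruct Hx as [hx Hx]. apply Rnot_lt_le in Hx.
  set (Px := Rpower x p).
  assert (hPx : Rpower M1 p - L / c < Px).
  { rewrite <- hPN. apply Rlt_Rpower_l; lra. }
  assert (hPM1 : 0 < Rpower M1 p) by apply Rpower_pos'.
  set (y := Rpower (Px + L / c) (/ p)).
  assert (hPy : Rpower y p = Px + L / c).
  { apply P_inv; auto. lra. }
  assert (hy0 : 0 < y) by apply Rpower_pos'.
  assert (hx0 : 0 < x) by lra.
  assert (hyx : y < x).
  { apply (P_lt_inv _ _ p); try lra. rewrite hPy. fold Px. lra. }
  assert (hMy : M1 < y).
  { apply (P_lt_inv _ _ p); lra. }
  destruct (HM0 y x) as [I [HI HIa]]; try lra.
  set (K := (1 - eps) * exp (c * Px)).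
  pose proof (Fg_int lam c K y x hc hl hy0 hx0) as HJ.
  assert (Hc := is_RInt_cmp _ _ y x _ _ (Rlt_le _ _ hyx) HI HJ).
  assert (Hval : Gg lam c K x - Gg lam c K y = - d).
  { unfold Gg. fold p. rewrite hPy. fold Px.
    replace (exp (- (c * (Px + L / c)))) with (exp (- (c * Px)) * / (1 - eps)).
    2:{ replace (- (c * (Px + L / c))) with (- (c * Px) + - L) by (field; lra).
        rewrite exp_plus, !exp_Ropp. unfold L. rewrite exp_ln by lra. reflexivity. }
    rewrite exp_Ropp. unfold K, d.
    assert (0 < exp (c * Px)) by apply exp_pos. field. repeat split; lra. }
  rewrite Hval in Hc.
  apply Rabs_def2 in HIa.
  assert (I <= - d); [|lra].
  apply Hc. intros t ht.
  assert (ht0 : 0 < t) by lra.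
  unfold Fg. fold p.
  assert (hW : W lam c t <= K).
  { apply (Rle_trans _ (W lam c x)); [apply W_mono; lra | exact Hx]. }
  unfold Rdiv. apply Rmult_le_compat_r. 
  { left. apply Rinv_0_lt_compat, Rmult_lt_0_compat; apply exp_pos. }
  lra.
Qed.

Theorem mainTheorem8 (lam c : R) :
  0 < lam < 1 ->
  0 < c < 2 / (1 - lam) ->
  ex_RInt_gen
    (fun t => (W lam c t - exp (c * Rpower t (1 - lam)))
              / (Rpower t lam * exp (c * Rpower t (1 - lam))))
    (at_point 1) (Rbar_locally p_infty) ->
  is_lim (fun x => W lam c x / exp (c * Rpower x (1 - lam))) p_infty 1.
Proof.
  intros hl [hc _] Hint.
  apply is_lim_spec. intros eps. simpl.
  set (e := Rmin (eps / 2) (1 / 2)).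
  assert (he : 0 < e /\ e < 1 /\ e < eps).
  { assert (H := cond_pos eps). unfold e, Rmin; destruct Rle_dec; lra. }
  destruct (upper lam c hl hc Hint e ltac:(lra)) as [M1 H1].
  destruct (lower lam c hl hc Hint e ltac:(lra)) as [M2 H2].
  exists (Rmax M1 M2). intros x hx.
  assert (hx1 : M1 < x) by (eapply Rle_lt_trans; [apply Rmax_l | exact hx]).
  assert (hx2 : M2 < x) by (eapply Rle_lt_trans; [apply Rmax_r | exact hx]).
  specialize (H1 x hx1). specialize (H2 x hx2).
  set (E := exp (c * Rpower x (1 - lam))) in *.
  assert (hE : 0 < E) by apply exp_pos.
  replace (W lam c x / E - 1) with ((W lam c x - E) * / E) by (field; lra).
  assert (hiE : 0 < / E) by (apply Rinv_0_lt_compat; lra).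
  apply Rabs_def1.
  - apply (Rmult_lt_reg_r E); [lra|]. rewrite Rmult_assoc, Rinv_l by lra. nra.
  - apply (Rmult_lt_reg_r E); [lra|]. rewrite Rmult_assoc, Rinv_l by lra. nra.
Qed.
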